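(* Let $n\ge 4$ be an integer and let $QD_{2^n}=\langle a,b : a^{2^{n-1}}=b^2=1,\ bab^{-1}=a^{2^{n-2}-1}\rangle$ be the quasidihedral group of order $2^n$. Let $\Gamma_{QD_{2^n}}$ be its non-commuting graph. Then the spectrum of the distance Laplacian matrix $D^L(\Gamma_{QD_{2^n}})$ (eigenvalues counted with multiplicity, multiplicities being added if two of the listed values coincide) consists of: (a) $0$ with multiplicity $1$; (b) $2^n-2$ and $2^n$, each with multiplicity $2^{n-2}$; (c) $2^n+2^{n-1}-4$ with multiplicity $2^{n-1}-3$.
   Context: For a finite non-abelian group $G$ with centre $Z(G)$, the non-commuting graph $\Gamma_G$ is the simple undirected graph with vertex set $G\setminus Z(G)$, in which two distinct vertices $u,v$ are adjacent if and only if $uv\ne vu$. For a connected graph $H$, $d_{uv}$ denotes the length of a shortest path between $u$ and $v$; the distance matrix $D(H)$ has $(u,v)$-entry $d_{uv}$. The transmission of a vertex $v$ is $\sum_{u} d_{uv}$, and $Tr(H)$ is the diagonal matrix of vertex transmissions. The distance Laplacian matrix is $D^L(H)=Tr(H)-D(H)$. *)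

(* Defs.v *)
From mathcomp Require Import all_boot all_order all_algebra all_fingroup all_solvable all_field.
Set Implicit Arguments. Unset Strict Implicit. Unset Printing Implicit Defensive.
Import GRing.Theory Num.Theory.

Section NonCommutingGraph.
Variables (gT : finGroupType) (G : {group gT}).

Definition ncg_vertices : {set gT} := (G :\: 'Z(G))%g.

(* Adjacency: two vertices are adjacent iff they do not commute
   (non-commuting elements are automatically distinct). *)
Definition ncg_adj (x y : gT) : bool :=
  [&& x \in ncg_vertices, y \in ncg_vertices & (x * y)%g != (y * x)%g].

Fixpoint ncg_ball (k : nat) (u : gT) : {set gT} :=
  match k with
  | 0 => [set u]
  | k'.+1 => ncg_ball k' u :|:
             [set y in ncg_vertices | [exists x in ncg_ball k' u, ncg_adj x y]]
  end.

(* Shortest path distance d_{uv}: least k with v within distance k of u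
   (the graph under consideration is connected, so such k < #|V| exists). *)
Definition ncg_dist (u v : gT) : nat :=
  find (fun k => v \in ncg_ball k u) (iota 0 #|ncg_vertices|).

Local Notation N := #|ncg_vertices|.
Local Notation vx := (@enum_val gT (mem ncg_vertices)).

Definition ncg_dist_mx : 'M[algC]_N :=
  \matrix_(i < N, j < N) (ncg_dist (vx i) (vx j))%:R%R.

Definition ncg_trans_mx : 'M[algC]_N :=
  diag_mx (\row_(i < N) (\sum_(j < N) ncg_dist_mx i j)%R).

Definition ncg_distLap : 'M[algC]_N := (ncg_trans_mx - ncg_dist_mx)%R.

End NonCommutingGraph.

(* Main.v *)
Require Import Defs.
From mathcomp Require Import all_boot all_order all_algebra all_fingroup all_solvable all_field.
From mathcomp Require Import zify ring.
Set Implicit Arguments. Unset Strict Implicit. Unset Printing Implicit Defensive.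
Section LAsec.
Import GRing.Theory Num.Theory.
Local Open Scope ring_scope.

Section LA.
Variable F : fieldType.

Lemma sim_char n (P A B : 'M[F]_n) : P \in unitmx -> P *m A = B *m P ->
  char_poly A = char_poly B.
Proof.
move=> Pu PAB; set P' := map_mx (@polyC F) P.
have e: P' *m char_poly_mx A = char_poly_mx B *m P'.
  by rewrite /char_poly_mx mulmxBr mulmxBl -!map_mxM PAB scalar_mxC.
have := congr1 determinant e; rewrite !det_mulmx => h.
have nz : \det P' != 0.
  by rewrite /P' det_map_mx polyC_eq0 -unitfE -unitmxE.
by apply: (mulfI nz); rewrite h mulrC.
Qed.

Lemma char_castmx m n (e : m = n) (A : 'M[F]_m) a :
  char_poly (castmx (e, e) A) = char_poly A /\
  \rank (eigenspace (castmx (e, e) A) a) = \rank (eigenspace A a).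
Proof. by case: n / e; rewrite castmx_id. Qed.

Lemma eig_dvd_core r k (A : 'M[F]_(r + k)) a :
  \rank (eigenspace A a) = r -> ('X - a%:P) ^+ r %| char_poly A.
Proof.
move=> rk.
set E := eigenspace A a.
have rkc : \rank (E^C)%MS = k by rewrite mxrank_compl rk addKn.
pose B1 := castmx (rk, erefl) (row_base E).
pose C1 := castmx (rkc, erefl) (row_base (E^C)%MS).
have eB1 : (B1 :=: E)%MS := eqmx_trans (eqmx_cast _ _) (eq_row_base E).
have eC1 : (C1 :=: E^C)%MS := eqmx_trans (eqmx_cast _ _) (eq_row_base _).
pose P0 := col_mx B1 C1.
have P0full : row_full P0.
  by rewrite -sub1mx -addsmxE (adds_eqmx eB1 eC1) sub1mx addsmx_compl_full.
have P0u : P0 \in unitmx by rewrite -row_full_unit.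
have B1A : B1 *m A = a *: B1.
  by apply/eigenspaceP; rewrite eB1.
pose X := (C1 *m A) *m pinvmx P0.
have XP : X *m P0 = C1 *m A by rewrite mulmxKpV // submx_full.
pose Bm := block_mx (a%:M : 'M_r) 0 (lsubmx X) (rsubmx X).
have PB : P0 *m A = Bm *m P0.
  rewrite /P0 mul_col_mx mul_block_col mul0mx addr0 mul_scalar_mx B1A.
  by rewrite -mul_row_col hsubmxK XP.
rewrite (sim_char P0u PB) /char_poly.
have -> : char_poly_mx Bm = block_mx (('X - a%:P)%:M : 'M_r) 0
     (- map_mx polyC (lsubmx X)) (char_poly_mx (rsubmx X)).
  rewrite /char_poly_mx /Bm map_block_mx /= map_mx0 scalar_mx_block.
  rewrite opp_block_mx add_block_mx oppr0 addr0 sub0r map_scalar_mx.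
  by rewrite raddfB.
by rewrite det_lblock det_scalar dvdp_mulIl.
Qed.

Lemma eig_dvd N (A : 'M[F]_N) a :
  ('X - a%:P) ^+ (\rank (eigenspace A a)) %| char_poly A.
Proof.
set r := \rank _.
have hN : N = (r + (N - r))%N by rewrite subnKC // rank_leq_col.
have [h1 h2] := char_castmx hN A a.
have := @eig_dvd_core r (N - r) (castmx (hN, hN) A) a h2.
by rewrite h1.
Qed.


Lemma prod_pow_monic (s : seq F) (d : F -> nat) :
  \prod_(a <- s) ('X - a%:P) ^+ d a \is monic.
Proof. by apply: monic_prod => a _; rewrite monic_exp // monicXsubC. Qed.

Lemma size_prod_pow (s : seq F) (d : F -> nat) :
  size (\prod_(a <- s) ('X - a%:P) ^+ d a) = (\sum_(a <- s) d a).+1.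
Proof.
elim: s => [|a s IH]; first by rewrite !big_nil size_poly1.
rewrite !big_cons size_Mmonic ?expf_neq0 ?polyXsubC_eq0 ?monic_exp ?monicXsubC ?prod_pow_monic //.
by rewrite size_exp_XsubC IH addSn addnS.
Qed.

Lemma eigen_char N (A : 'M[F]_N) (s : seq F) (d : F -> nat) : uniq s ->
  (forall a, a \in s -> (d a <= \rank (eigenspace A a))%N) ->
  (\sum_(a <- s) d a)%N = N ->
  char_poly A = \prod_(a <- s) ('X - a%:P) ^+ d a.
Proof.
move=> us hd hs.
have dv : \prod_(a <- s) ('X - a%:P) ^+ d a %| char_poly A.
  clear hs; elim: s us hd => [|a s IH] /=; first by rewrite big_nil dvd1p.
  case/andP=> nas us hd; rewrite big_cons Gauss_dvdp.
    rewrite IH // ?andbT => [|b bs]; last by apply: hd; rewrite inE bs orbT.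
    apply: dvdp_trans (eig_dvd A a); apply: dvdp_exp2l; apply: hd.
    by rewrite inE eqxx.
  apply: coprimep_expl; rewrite coprimep_sym coprimep_XsubC rootE horner_prod.
  rewrite prodf_seq_neq0; apply/allP => b bs /=; rewrite horner_exp hornerXsubC.
  by rewrite expf_neq0 // subr_eq0; apply: contraNneq nas => ->.
apply/eqP; rewrite eq_sym -eqp_monic ?prod_pow_monic ?char_poly_monic //.
by rewrite -dvdp_size_eqp // size_prod_pow size_char_poly hs.
Qed.


Lemma rank_addmx m n (A B : 'M[F]_(m, n)) : (\rank (A + B)%R <= \rank A + \rank B)%N.
Proof.
apply: leq_trans (mxrank_adds_leqif A B).
by apply: mxrankS; exact: addmx_sub_adds (submx_refl A) (submx_refl B).
Qed.

Lemma rank_decomp (K : finType) (P : pred K) N (A : 'M[F]_N) (f g : K -> 'I_N -> F) :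
  (forall i j, A i j = \sum_(k | P k) f k i * g k j) -> (\rank A <= #|P|)%N.
Proof.
move=> hA.
have -> : A = \sum_(k | P k) (\col_i f k i) *m (\row_j g k j).
  apply/matrixP => i j; rewrite hA summxE; apply: eq_bigr => k _.
  by rewrite !mxE big_ord1 !mxE.
rewrite -sum1_card.
apply: (big_ind2 (fun (B : 'M_N) (c : nat) => \rank B <= c)%N).
- by rewrite mxrank0.
- by move=> B1 c1 B2 c2 h1 h2; apply: leq_trans (rank_addmx _ _) (leq_add h1 h2).
- by move=> k _; apply: leq_trans (mxrankM_maxr _ _) (rank_leq_row _).
Qed.

Lemma eigen_rank N (A : 'M[F]_N) a d :
  (\rank (A - a%:M)%R <= N - d)%N -> (d <= N)%N -> (d <= \rank (eigenspace A a))%N.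
Proof.
move=> h hd; rewrite /eigenspace mxrank_ker.
by rewrite leq_subRL ?rank_leq_row // addnC -leq_subRL.
Qed.

End LA.

End LAsec.
Section GRsec.
Local Open Scope group_scope.

Lemma SD_facts (gT : finGroupType) (G : {group gT}) n : 3 < n -> G \isog 'SD_(2 ^ n) ->
  exists (X : {group gT}) (x0 y z : gT),
  [/\ [/\ X \subset G, #|G| = (2 ^ n)%N & #|X| = (2 ^ n.-1)%N],
      forall u, (u \in 'Z(G)) = (u == 1%g) || (u == z),
      z \in X /\ z != 1%g,
      [/\ {in X &, forall u v, commute u v},
          forall u t, u \in X -> t \in G :\: X -> commute u t -> u \in 'Z(G) &
          forall t s, t \in G :\: X -> s \in G :\: X -> commute t s ->
             (s == t) || (s == (t * z)%g)] &
      y \in G :\: X /\ x0 \in X :\: 'Z(G)].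
Proof.
move=> n3 isoG.
have [[x y] genG [oy xy]] := generators_semidihedral n3 isoG.
have [[defXY _ _] _ [defZ oZ _ _] _ _] := semidihedral_structure n3 genG isoG oy.
case: genG => oG Gx ox X'y.
pose X := <[x]>%G.
pose z := (x ^+ (2 ^ n.-2))%g.
have XG : X \subset G by rewrite cycle_subG.
have oz : #[z] = 2 by rewrite orderE -defZ.
have Zz : forall u, (u \in 'Z(G)) = (u == 1%g) || (u == z).
  by move=> u; rewrite defZ cycle2g // !inE.
have Xz : z \in X by rewrite mem_cycle.
have z1 : z != 1%g by rewrite -order_gt1 oz.
have cX : {in X &, forall u v, commute u v}.
  by move=> u v Xu Xv; apply: (centsP (cycle_abelian x)).
have iGX : #|G : X| = 2.
  rewrite -divgS // oG /= -orderE ox.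
  by rewrite -(ltn_predK n3) expnS mulnK // expn_gt0.
have c2 : forall u t, u \in X -> t \in G :\: X -> commute u t -> u \in 'Z(G).
  move=> u t Xu /setDP[Gt X't] cut.
  have sXC : X \subset 'C_G[u].
    rewrite subsetI XG sub_cent1; apply/centP => v Xv; exact: cX.
  have := Lagrange_index (subsetIl G 'C[u]) sXC; rewrite iGX => h.
  have : 1 < #|'C_G[u] : X|.
    rewrite indexg_gt1; apply/subsetPn; exists t => //.
    by rewrite inE Gt; apply/cent1P; apply/commute_sym.
  move=> h1.
  have h2 : #|G : 'C_G[u]| = 1%N.
    move: h h1; move: #|G : 'C_G[u]| #|'C_G[u] : X| => a b; nia.
  have eC := index1g (subsetIl G 'C[u]) h2.
  apply/centerP; split; first exact: (subsetP XG).
  move=> v Gv; have : v \in 'C_G[u] by rewrite eC.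
  by rewrite inE => /andP[_ /cent1P].
have c3 : forall t s, t \in G :\: X -> s \in G :\: X -> commute t s ->
             (s == t) || (s == (t * z)%g).
  move=> t s X't X's cts.
  have /rcosetP[w Xw sE] : s \in X :* t by rewrite (rcoset_index2 XG iGX X't).
  subst s.
  have cwt : commute w t.
    by apply: (mulIg t); rewrite -(mulgA t) cts.
  have := c2 w t Xw X't cwt; rewrite Zz; case/orP=> /eqP ->.
    by rewrite mul1g eqxx.
  have Zz' : z \in 'Z(G) by rewrite Zz eqxx orbT.
  case/centerP: Zz' => _ cz.
  by rewrite (cz t) ?eqxx ?orbT //; case/setDP: X't.
have big : 2 < 2 ^ n.-1.
  rewrite -[X in X < _]/(2 ^ 1)%N ltn_exp2l // -ltnS (ltn_predK n3).
  exact: leq_trans n3.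
have Zx : x \notin 'Z(G).
  rewrite Zz negb_or; apply/andP; split; apply/eqP => h; have := ox;
    rewrite h ?order1 ?oz => e; by rewrite -e in big.
exists X, x, y, z; split => //; split => //.
by rewrite inE Zx cycle_id.
Qed.

End GRsec.


Section Abs.
Local Open Scope group_scope.
Variables (gT : finGroupType) (G X : {group gT}) (x0 y z : gT) (r : nat).
Hypotheses (XG : X \subset G) (oG : #|G| = (4 * r)%N) (oX : #|X| = (2 * r)%N)
  (r4 : (4 <= r)%N)
  (hZ : forall u, (u \in 'Z(G)) = (u == 1) || (u == z))
  (Xz : z \in X) (z1 : z != 1)
  (cX : {in X &, forall u v, commute u v})
  (c2 : forall u t, u \in X -> t \in G :\: X -> commute u t -> u \in 'Z(G))
  (c3 : forall t s, t \in G :\: X -> s \in G :\: X -> commute t s ->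
             (s == t) || (s == t * z))
  (Gy : y \in G :\: X) (Xx0 : x0 \in X :\: 'Z(G)).

Local Notation V := (ncg_vertices G).

Lemma Zz : z \in 'Z(G). Proof. by rewrite hZ eqxx orbT. Qed.

Lemma zC g : g \in G -> commute z g.
Proof. by case/centerP: Zz => _; apply. Qed.

Lemma Gz : z \in G. Proof. exact: subsetP XG _ Xz. Qed.

Lemma zz : z * z = 1.
Proof.
have : z * z \in 'Z(G) by rewrite groupM ?Zz.
rewrite hZ; case/orP => /eqP // h.
by move: z1; rewrite -(mulgI z (z : gT) 1) ?eqxx // mulg1.
Qed.

Lemma inV u : (u \in V) = (u \in G) && (u != 1) && (u != z).
Proof. by rewrite /ncg_vertices in_setD hZ negb_or andbC andbA. Qed.

Lemma VG u : u \in V -> u \in G.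
Proof. by rewrite inV => /andP[/andP[]]. Qed.

Lemma nX_V u : u \in G :\: X -> u \in V.
Proof.
case/setDP=> Gu Xu; rewrite inV Gu /=.
by apply/andP; split; apply: contraNneq Xu => ->; rewrite ?group1.
Qed.

Lemma nXz u : u \in G :\: X -> u * z \in G :\: X.
Proof.
case/setDP=> Gu Xu; rewrite in_setD (groupM Gu Gz) andbT.
by apply: contra Xu => h; rewrite -(mulgK z u) groupM ?groupV.
Qed.

Lemma uzK u : u * z * z = u.
Proof. by rewrite -mulgA zz mulg1. Qed.

Lemma uz_neq u : u * z != u.
Proof. by apply: contra z1 => /eqP h; rewrite -(mulKg u z) h mulVg. Qed.

Definition same u v : bool :=
  if u \in X then v \in X else (v == u) || (v == u * z).

Lemma commute_same u v : u \in V -> v \in V -> (u * v == v * u) = same u v.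
Proof.
move=> Vu Vv; have Gu := VG Vu; have Gv := VG Vv.
have Zu : u \notin 'Z(G) by move: Vu; rewrite /ncg_vertices in_setD => /andP[].
have Zv : v \notin 'Z(G) by move: Vv; rewrite /ncg_vertices in_setD => /andP[].
rewrite /same; case Xu: (u \in X); case Xv: (v \in X).
- by apply/eqP; apply: cX.
- apply/negP => /eqP h; case/negP: Zu; apply: (c2 Xu _ h).
  by rewrite in_setD Xv Gv.
- have hX : u \in G :\: X by rewrite in_setD Xu Gu.
  have X'uz := nXz hX.
  have nvu : (v == u) = false by apply/eqP => ev; move: Xu; rewrite -ev Xv.
  have nvuz : (v == u * z) = false.
    by apply/eqP => ev; case/setDP: X'uz; rewrite -ev Xv.
  rewrite nvu nvuz.
  apply/negP => /eqP h.
  by case/negP: Zv; apply: (c2 Xv hX (esym h)).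
- have hu : u \in G :\: X by rewrite in_setD Xu Gu.
  have hv : v \in G :\: X by rewrite in_setD Xv Gv.
  apply/idP/idP => [/eqP h|]; first exact: c3.
  case/orP => /eqP ->; first by [].
  by rewrite -{1}(zC Gu) mulgA.
Qed.


Lemma Zset : 'Z(G) = [set 1; z].
Proof. by apply/setP => u; rewrite hZ !inE. Qed.

Lemma cardV : #|V| = (4 * r - 2)%N.
Proof.
rewrite /ncg_vertices cardsD (setIidPr (center_sub G)) oG Zset cards2.
by rewrite eq_sym z1.
Qed.

Definition dist' u v : nat := if u == v then 0%N else if same u v then 2%N else 1%N.

Lemma find_iota_first (p : pred nat) N k : (k < N)%N -> p k ->
  (forall j, (j < k)%N -> ~~ p j) -> find p (iota 0 N) = k.
Proof.
move=> kN pk hj.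
rewrite -(subnKC (ltnW kN)) iotaD find_cat size_iota add0n.
have -> : has p (iota 0 k) = false.
  by apply/negbTE/hasPn => j; rewrite mem_iota add0n => /andP[_ /hj].
have -> : (N - k = (N - k).-1.+1)%N by rewrite prednK // subn_gt0.
by rewrite /= pk addn0.
Qed.

Lemma ball1E u v : (v \in ncg_ball G 1%N u) =
  (v == u) || ((v \in V) && ncg_adj G u v).
Proof.
rewrite /= in_setU in_set1 in_set; congr (_ || (_ && _)).
apply/existsP/idP => [[w /andP[]]|h]; first by rewrite in_set1 => /eqP ->.
by exists u; rewrite in_set1 eqxx.
Qed.

Lemma adjE u v : u \in V -> v \in V -> ncg_adj G u v = ~~ same u v.
Proof. by move=> Vu Vv; rewrite /ncg_adj Vu Vv commute_same. Qed.

Lemma dist_eq u v : u \in V -> v \in V -> ncg_dist G u v = dist' u v.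
Proof.
move=> Vu Vv; rewrite /ncg_dist /dist'.
have N3 : (2 < #|V|)%N by rewrite cardV; lia.
have [<-|nuv] := eqVneq u v.
  by apply: find_iota_first => //; [lia | rewrite /= in_set1].
have nvu : (v == u) = false by apply/negbTE; rewrite eq_sym.
case sm: (same u v).
  apply: find_iota_first => //; last first.
    move=> j; case: j => [|[|j]] // _; first by rewrite /= in_set1 nvu.
    by rewrite ball1E nvu adjE // sm andbF.
  have hw : exists2 w, w \in V & ~~ same u w && ~~ same w v.
    have Vy := nX_V Gy; have Vx0 : x0 \in V.
      by case/setDP: Xx0 => X0 Zx0; rewrite /ncg_vertices in_setD Zx0 (subsetP XG).
    move: sm; rewrite /same; case Xu: (u \in X) => sm.
      exists y => //; have [_ X'y] := setDP Gy; have [_ X'yz] := setDP (nXz Gy).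
      rewrite (negbTE X'y) /=; apply/norP; split; apply/negP => /eqP e;
        [move: X'y | move: X'yz]; by rewrite -e sm.
    exists x0 => //; case/setDP: Xx0 => X0 _.
    have hu : u \in G :\: X by rewrite in_setD Xu (VG Vu).
    have [_ X'uz] := setDP (nXz hu).
    rewrite X0 /=; apply/andP; split.
      apply/norP; split; apply/negP => /eqP e;
        [by move: Xu; rewrite -e X0 | by move: X'uz; rewrite -e X0].
    by case/orP: sm => /eqP ->; [rewrite Xu | exact: X'uz].
  case: hw => w Vw /andP[s1 s2].
  have -> : ncg_ball G 2 u = ncg_ball G 1%N u :|:
     [set y0 in V | [exists x in ncg_ball G 1%N u, ncg_adj G x y0]] by [].
  rewrite in_setU in_set Vv /=; apply/orP; right; apply/existsP; exists w.
  by rewrite ball1E Vw adjE // s1 orbT /= adjE.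
case sm1: (same u v) sm => // _.
apply: find_iota_first => //; first lia.
  by rewrite ball1E Vv adjE // sm1 orbT.
by move=> j; case: j => // _; rewrite /= in_set1 nvu.
Qed.


Lemma same_sym u v : u \in V -> v \in V -> same u v = same v u.
Proof. by move=> Vu Vv; rewrite -commute_same // -commute_same // eq_sym. Qed.

Lemma same_refl u : same u u.
Proof. by rewrite /same; case: (u \in X); rewrite ?eqxx. Qed.

Lemma dist_sym u v : u \in V -> v \in V -> dist' u v = dist' v u.
Proof. by move=> Vu Vv; rewrite /dist' same_sym // eq_sym. Qed.

Definition Tn u : nat := if u \in X then (6 * r - 6)%N else (4 * r - 2)%N.

Lemma cardVX : #|V :&: X| = (2 * r - 2)%N.
Proof.
have -> : V :&: X = X :\: 'Z(G).
  apply/setP => v; rewrite /ncg_vertices !in_setI !in_setD.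
  by case Xv: (v \in X); rewrite ?andbF ?andbT // (subsetP XG v Xv) andbT.
rewrite cardsD oX Zset (setIidPr _) ?cards2 1?eq_sym ?z1 //.
by apply/subsetP => v; rewrite !inE => /orP[] /eqP ->; rewrite ?group1.
Qed.

Lemma card_same u : u \in V ->
  #|[set v | (v \in V) && same u v]| = if u \in X then (2 * r - 2)%N else 2%N.
Proof.
move=> Vu; rewrite /same; case Xu: (u \in X).
  by rewrite -cardVX; apply: eq_card => v; rewrite !inE.
have hu : u \in G :\: X by rewrite in_setD Xu (VG Vu).
have Vuz := nX_V (nXz hu).
rewrite -[2%N](_ : #|[set u; u * z]| = 2%N); last by rewrite cards2 eq_sym uz_neq.
apply: eq_card => v; rewrite in_set in_set2.
case: (v =P u) => [->|_]; first by rewrite Vu.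
case: (v =P (u * z)) => [->|_]; [by rewrite Vuz | by rewrite andbF].
Qed.

Lemma trans_nat u : u \in V -> (\sum_(v in V) dist' u v)%N = Tn u.
Proof.
move=> Vu.
have key : forall v, (dist' u v + 2 * (u == v) = 1 + same u v)%N.
  by move=> v; rewrite /dist'; case: eqP => [->|]; rewrite ?same_refl //;
     case: (same u v).
have h1 : (\sum_(v in V) (2 * (u == v)))%N = 2%N.
  rewrite (bigD1 u) //= eqxx big1 ?addn0 // => v /andP[_ nvu].
  by rewrite eq_sym (negbTE nvu).
have h2 : (\sum_(v in V) (1 + same u v))%N = (#|V| + #|[set v | (v \in V) && same u v]|)%N.
  rewrite big_split /= sum1_card; congr (_ + _)%N.
  rewrite -sum1dep_card big_mkcondr /=; apply: eq_bigr => v _.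
  by case: (same u v).
have : (\sum_(v in V) dist' u v + 2 = #|V| + #|[set v | (v \in V) && same u v]|)%N.
  by rewrite -h1 -big_split /= -h2; apply: eq_bigr => v _; rewrite key.
rewrite card_same // cardV /Tn; case: (u \in X); lia.
Qed.


Local Open Scope ring_scope.
Import GRing.Theory Num.Theory.

Definition vx (i : 'I_#|V|) : gT := @enum_val gT (mem (ncg_vertices G)) i.

Lemma vxV i : vx i \in V.
Proof. exact: enum_valP. Qed.

Lemma vx_eq i j : (vx i == vx j) = (i == j).
Proof. exact: (inj_eq enum_val_inj). Qed.

Lemma LapE i j : ncg_distLap G i j =
  (i == j)%:R * (Tn (vx i))%:R - ((dist' (vx i) (vx j))%:R : algC).
Proof.
rewrite /ncg_distLap /ncg_trans_mx !mxE.
rewrite (dist_eq (vxV i) (vxV j)) -/(vx i) -/(vx j).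
congr (_ - _); rewrite mulr_natl; congr (_ *+ _).
rewrite -(trans_nat (vxV i)) natr_sum (big_enum_val (fun v => (dist' (vx i) v)%:R)).
by apply: eq_bigr => k _; rewrite /ncg_dist_mx mxE (dist_eq (vxV i) (vxV k)).
Qed.


Definition aa (l : algC) u w : algC :=
  (u == w)%:R * ((Tn u)%:R - l) - (dist' u w)%:R.

Lemma subE l i j : (ncg_distLap G - l%:M) i j = aa l (vx i) (vx j).
Proof.
have sE : (l%:M : 'M[algC]_#|V|) i j = l *+ (i == j) by rewrite mxE.
rewrite mxE LapE mxE sE /aa vx_eq; case: (i == j) => /=.
  by rewrite mulr1n !mul1r; ring.
by rewrite mulr0n !mul0r subr0.
Qed.

Lemma rank_bound l (S : {set gT}) (f : gT -> gT -> algC) :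
  (forall u w, u \in V -> w \in V -> aa l u w = \sum_(k in S) f k u * aa l k w) ->
  (\rank (ncg_distLap G - l%:M)%R <= #|S|)%N.
Proof.
move=> h.
have hc : #|[pred k | k \in S]| = #|S| by apply: eq_card.
rewrite -hc; apply: (rank_decomp (P := [pred k | k \in S])
   (f := fun k i => f k (vx i)) (g := fun k j => aa l k (vx j))).
by move=> i j; rewrite subE h ?vxV.
Qed.

Lemma sum_delta (P : pred gT) (F : gT -> algC) u :
  \sum_(k | P k) (u == k)%:R * F k = (P u)%:R * F u.
Proof.
rewrite (eq_bigr (fun k => if k == u then F k else 0)); last first.
  by move=> k _; rewrite eq_sym; case: (k == u); rewrite ?mul1r ?mul0r.
rewrite -big_mkcondr /=; case Pu: (P u).
  by rewrite (eq_bigl (fun k => k == u)) ?big_pred1_eq ?mul1r // => k;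
     case: eqP => [->|]; rewrite ?Pu ?andbF.
by rewrite big_pred0 ?mul0r // => k; case: eqP => [->|]; rewrite ?Pu ?andbF.
Qed.

Lemma colsum0 w : w \in V -> \sum_(k in V) aa 0 k w = 0.
Proof.
move=> Vw; rewrite /aa sumrB.
rewrite (eq_bigr (fun k => (w == k)%:R * ((Tn k)%:R - 0))); last first.
  by move=> k _; rewrite eq_sym.
rewrite sum_delta Vw mul1r subr0.
rewrite (eq_bigr (fun k => (dist' w k)%:R)); last first.
  by move=> k Vk; rewrite dist_sym.
by rewrite -natr_sum trans_nat // subrr.
Qed.

Lemma rank0 : (\rank (ncg_distLap G - 0%:M)%R <= #|V| - 1)%N.
Proof.
have Vy := nX_V Gy.
have cS : #|V :\ y| = (#|V| - 1)%N by rewrite (cardsD1 y V) Vy add1n subSS subn0.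
rewrite -cS; apply: (rank_bound (f := fun k u => (u == k)%:R - (u == y)%:R)).
move=> u w Vu Vw.
have e : \sum_(k in V :\ y) aa 0 k w = - aa 0 y w.
  have := colsum0 Vw; rewrite (bigD1 y) //= => h0.
  have -> : \sum_(k in V :\ y) aa 0 k w = \sum_(k in V | k != y) aa 0 k w.
    by apply: eq_bigl => k; rewrite in_setD1 andbC.
  by apply/eqP; rewrite -addr_eq0 addrC h0.
rewrite (eq_bigr (fun k => (u == k)%:R * aa 0 k w - (u == y)%:R * aa 0 k w)); last first.
  by move=> k _; rewrite mulrBl.
rewrite sumrB sum_delta -mulr_sumr e in_setD1 Vu andbT.
by case: eqP => [->|_] /=; rewrite ?mul0r ?mul1r ?sub0r ?opprK ?subr0.
Qed.


Lemma aaE l u w : aa l u w =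
  if u == w then (Tn u)%:R - l else if same u w then -2 else -1.
Proof.
rewrite /aa /dist'; case: eqP => _; first by rewrite mul1r subr0.
by rewrite mul0r sub0r; case: (same u w).
Qed.

Lemma TnX u : u \in X -> (Tn u)%:R = 6 * r%:R - 6 :> algC.
Proof.
move=> Xu; rewrite /Tn Xu natrB; last by lia.
by rewrite natrM.
Qed.

Lemma TnN u : u \notin X -> (Tn u)%:R = 4 * r%:R - 2 :> algC.
Proof.
move=> Xu; rewrite /Tn (negbTE Xu) natrB; last by lia.
by rewrite natrM.
Qed.

Lemma aaX l u w : u \in X -> aa l u w =
  if u == w then 6 * r%:R - 6 - l else if w \in X then -2 else -1.
Proof. by move=> Xu; rewrite aaE TnX // /same Xu. Qed.

Lemma aaN l u w : u \notin X -> aa l u w =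
  if u == w then 4 * r%:R - 2 - l else if (w == u) || (w == u * z)%g then -2 else -1.
Proof. by move=> Xu; rewrite aaE TnN // /same (negbTE Xu). Qed.

Lemma cardGX : #|G :\: X| = (2 * r)%N.
Proof. by rewrite cardsD (setIidPr XG) oG oX; lia. Qed.

Lemma rank1 : (\rank (ncg_distLap G - (6 * r%:R - 4)%:M)%R <= #|V| - (2 * r - 3))%N.
Proof.
have X0 : x0 \in X by case/setDP: Xx0.
have cS : #|x0 |: (G :\: X)| = (#|V| - (2 * r - 3))%N.
  rewrite cardsU1 cardGX cardV in_setD X0 /=; lia.
rewrite -cS.
apply: (rank_bound (f := fun k u => (k == x0)%:R * (u \in X)%:R + (k \notin X)%:R * (u == k)%:R)).
move=> u w Vu Vw.
rewrite (eq_bigr (fun k => (u \in X)%:R * ((x0 == k)%:R * aa (6 * r%:R - 4) k w)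
   + (u == k)%:R * ((k \notin X)%:R * aa (6 * r%:R - 4) k w))); last first.
  by move=> k _; rewrite eq_sym; ring.
rewrite big_split /= -mulr_sumr !sum_delta setU11 mul1r.
case Xu: (u \in X) => /=.
  rewrite mul1r mul0r mulr0 addr0.
  have hl : 6 * r%:R - 6 - (6 * r%:R - 4) = -2 :> algC by ring.
  have rot k : k \in X -> aa (6 * r%:R - 4) k w = if w \in X then -2 else -1.
    by move=> Xk; rewrite aaX // hl; case: eqP => [<-|_]; rewrite ?Xk.
  by rewrite !rot.
have hu : u \in G :\: X by rewrite in_setD Xu (VG Vu).
by rewrite mul0r add0r in_setU1 hu orbT !mul1r.
Qed.


Definition rep k := (enum_rank k < enum_rank (k * z)%g)%N.

Lemma rep_z k : rep (k * z)%g = ~~ rep k.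
Proof.
have ne : (enum_rank k == enum_rank (k * z)%g :> nat) = false.
  by rewrite val_eqE (inj_eq enum_rank_inj) eq_sym (negbTE (uz_neq k)).
by rewrite /rep uzK ltnNge leq_eqVlt ne.
Qed.

Definition Rp := (G :\: X) :&: [set k | rep k].
Definition S2 := (V :&: X) :|: Rp.

Lemma cardRp : #|Rp| = r.
Proof.
pose Rn := (G :\: X) :\: [set k | rep k].
have h := cardsID [set k | rep k] (G :\: X).
have e : Rn = (fun k => (k * z)%g) @: Rp.
  apply/setP => v; apply/idP/imsetP.
    rewrite /Rn in_setD inE => /andP[nr hv].
    exists (v * z)%g; last by rewrite uzK.
    by rewrite /Rp in_setI inE rep_z nr nXz.
  case=> k; rewrite /Rp in_setI inE => /andP[hk rk] ->.
  by rewrite /Rn in_setD inE rep_z rk nXz.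
have : #|Rn| = #|Rp| by rewrite e card_imset //; apply: mulIg.
rewrite /Rn /Rp in h *; rewrite cardGX in h; lia.
Qed.

Lemma cardS2 : #|S2| = (3 * r - 2)%N.
Proof.
rewrite /S2 cardsU cardVX cardRp.
have -> : V :&: X :&: Rp = set0.
  apply/setP => v; rewrite /Rp !inE.
  by case: (v \in X); rewrite ?andbF.
rewrite cards0; lia.
Qed.

Lemma inS2 u : u \in V -> (u \in S2) = if u \in X then true else rep u.
Proof.
move=> Vu; rewrite /S2 /Rp in_setU !in_setI Vu /=.
case Xu: (u \in X) => //=; rewrite in_setD Xu (VG Vu) /=.
by rewrite inE.
Qed.

Lemma uzX u : u \in X -> (u * z)%g \in X.
Proof. by move=> Xu; rewrite groupM. Qed.

Lemma rank2 : (\rank (ncg_distLap G - (4 * r%:R)%:M)%R <= #|V| - r)%N.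
Proof.
have cS : #|S2| = (#|V| - r)%N by rewrite cardS2 cardV; lia.
rewrite -cS.
apply: (rank_bound (f := fun k u => (u == k)%:R + (k \notin X)%:R * ((u * z)%g == k)%:R)).
move=> u w Vu Vw.
rewrite (eq_bigr (fun k => (u == k)%:R * aa (4 * r%:R) k w
   + ((u * z)%g == k)%:R * ((k \notin X)%:R * aa (4 * r%:R) k w))); last first.
  by move=> k _; ring.
rewrite big_split /= !sum_delta inS2 //.
case Xu: (u \in X) => /=.
  by rewrite uzX // mul0r mulr0 addr0 mul1r.
have hu : u \in G :\: X by rewrite in_setD Xu (VG Vu).
have Vuz := nX_V (nXz hu).
have [_ X'uz] := setDP (nXz hu).
rewrite inS2 // (negbTE X'uz) /= rep_z mul1r.
have e : aa (4 * r%:R) (u * z)%g w = aa (4 * r%:R) u w.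
  rewrite !aaN ?Xu ?X'uz // uzK.
  have hl : 4 * r%:R - 2 - 4 * r%:R = -2 :> algC by ring.
  rewrite hl (eq_sym w u) (eq_sym w (u * z)%g).
  by case: (u == w); case: ((u * z)%g == w).
by rewrite e; case: (rep u); rewrite /= ?mul1r ?mul0r ?addr0 ?add0r.
Qed.


Lemma colX w : w \in V ->
  \sum_(k in V :&: X) aa (4 * r%:R - 2) k w = - (2 * r%:R - 2).
Proof.
move=> Vw.
have hl : 6 * r%:R - 6 - (4 * r%:R - 2) = 2 * r%:R - 4 :> algC by ring.
case Xw: (w \in X).
  have VXw : w \in V :&: X by rewrite in_setI Vw Xw.
  rewrite (bigD1 w) //= aaX // eqxx hl.
  rewrite (eq_bigr (fun _ => -2)); last first.
    by move=> k /andP[]; rewrite in_setI => /andP[_ Xk] nkw; rewrite aaX // (negbTE nkw) Xw.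
  rewrite (eq_bigl (fun k => k \in (V :&: X) :\ w)); last first.
    by move=> k; rewrite in_setD1 andbC.
  rewrite sumr_const.
  have -> : #|V :&: X :\ w| = (2 * r - 3)%N.
    by have := cardsD1 w (V :&: X); rewrite VXw cardVX; lia.
  rewrite -(mulr_natr (-2)) natrB; last by lia.
  rewrite natrM; ring.
rewrite (eq_bigr (fun _ => -1)); last first.
  move=> k; rewrite in_setI => /andP[_ Xk]; rewrite aaX // Xw.
  by case: eqP => // ekw; move: Xk; rewrite ekw Xw.
rewrite sumr_const cardVX -(mulr_natr (-1)) natrB; last by lia.
by rewrite natrM; ring.
Qed.

Lemma rank3 : (\rank (ncg_distLap G - (4 * r%:R - 2)%:M)%R <= #|V| - r)%N.
Proof.
have cS : #|S2| = (#|V| - r)%N by rewrite cardS2 cardV; lia.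
rewrite -cS.
pose c : algC := 2 / (2 * r%:R - 2).
pose l : algC := 4 * r%:R - 2.
have r2 : 2 * r%:R - 2 != 0 :> algC.
  have -> : 2 * r%:R - 2 = (2 * r - 2)%:R :> algC.
    by rewrite natrB ?natrM //; lia.
  by rewrite pnatr_eq0; lia.
apply: (rank_bound (f := fun k u => (u == k)%:R - (k \notin X)%:R * ((u * z)%g == k)%:R
   + c * (~~ (u \in X) && ~~ rep u)%:R * (k \in X)%:R)).
move=> u w Vu Vw.
rewrite (eq_bigr (fun k => (u == k)%:R * aa l k w
   - ((u * z)%g == k)%:R * ((k \notin X)%:R * aa l k w)
   + c * (~~ (u \in X) && ~~ rep u)%:R * ((k \in X)%:R * aa l k w))); last first.
  by move=> k _; rewrite /l; ring.
rewrite !big_split /= sumrN !sum_delta -mulr_sumr inS2 //.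
have e3 : \sum_(k in S2) (k \in X)%:R * aa l k w = - (2 * r%:R - 2).
  rewrite -(colX Vw) big_mkcond [RHS]big_mkcond /=; apply: eq_bigr => k _.
  rewrite /S2 /Rp in_setU !in_setI.
  case Xk: (k \in X); rewrite ?andbF ?andbT ?mul1r ?mul0r /=.
    by rewrite (in_setD G X k) Xk /= orbF.
  by case: ifP.
rewrite e3.
case Xu: (u \in X) => /=.
  by rewrite uzX // mul0r mulr0 subr0 mulr0 mul0r addr0 mul1r.
have hu : u \in G :\: X by rewrite in_setD Xu (VG Vu).
have Vuz := nX_V (nXz hu).
have [_ X'uz] := setDP (nXz hu).
rewrite inS2 // (negbTE X'uz) /= rep_z mul1r.
have hl : 4 * r%:R - 2 - l = 0 by rewrite /l subrr.
have e : aa l (u * z)%g w + aa l u w = -2.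
  rewrite !aaN ?Xu ?X'uz // uzK hl (eq_sym w u) (eq_sym w (u * z)%g).
  case: (eqVneq u w) => [->|nuw]; first by rewrite (negbTE (uz_neq w)) /= addr0.
  by case: ifP => hB /=; rewrite ?hB /=; ring.
case: (rep u) => /=; first by rewrite mul0r mulr0 mul0r subr0 addr0 mul1r.
rewrite mul0r add0r mulr1.
have ce : c * - (2 * r%:R - 2) = -2 by rewrite /c mulrN divfK.
rewrite ce; apply/eqP; rewrite -subr_eq0; apply/eqP.
rewrite /l in e *.
set A := aa (4 * r%:R - 2) u w in e *.
set B := aa (4 * r%:R - 2) (u * z)%g w in e *.
by rewrite -e; ring.
Qed.


Lemma char_abs : char_poly (ncg_distLap G) =
  ('X - 0%:P) * (('X - ((4 * r - 2)%N)%:R%:P) ^+ r *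
    (('X - ((4 * r)%N)%:R%:P) ^+ r * ('X - ((6 * r - 4)%N)%:R%:P) ^+ (2 * r - 3))).
Proof.
have cV := cardV.
have hV1 : (1 <= #|V|)%N by rewrite cV; lia.
have hVr : (r <= #|V|)%N by rewrite cV; lia.
have hV3 : (2 * r - 3 <= #|V|)%N by rewrite cV; lia.
have hVs : (1 + (r + (r + (2 * r - 3 + 0))))%N = #|V| by rewrite cV; lia.
have e1 : ((4 * r - 2)%N)%:R = 4 * r%:R - 2 :> algC by rewrite natrB ?natrM //; lia.
have e2 : ((4 * r)%N)%:R = 4 * r%:R :> algC by rewrite natrM.
have e3 : ((6 * r - 4)%N)%:R = 6 * r%:R - 4 :> algC by rewrite natrB ?natrM //; lia.
set v1 : algC := (4 * r - 2)%N%:R.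
set v2 : algC := (4 * r)%N%:R.
set v3 : algC := (6 * r - 4)%N%:R.
pose s : seq algC := [:: 0; v1; v2; v3].
pose d (a : algC) : nat := if a == 0 then 1%N else if a == v1 then r
  else if a == v2 then r else (2 * r - 3)%N.
have n1 : (v1 == 0) = false by rewrite pnatr_eq0; lia.
have n2 : (v2 == 0) = false by rewrite pnatr_eq0; lia.
have n3 : (v3 == 0) = false by rewrite pnatr_eq0; lia.
have n12 : (v2 == v1) = false by rewrite eqr_nat; lia.
have n13 : (v3 == v1) = false by rewrite eqr_nat; lia.
have n23 : (v3 == v2) = false by rewrite eqr_nat; lia.
have d0 : d 0 = 1%N by rewrite /d eqxx.
have d1 : d v1 = r by rewrite /d n1 eqxx.
have d2 : d v2 = r by rewrite /d n2 n12 eqxx.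
have d3 : d v3 = (2 * r - 3)%N by rewrite /d n3 n13 n23.
have us : uniq s.
  rewrite /s /= !inE !negb_or (eq_sym 0 v1) (eq_sym 0 v2) (eq_sym 0 v3).
  by rewrite (eq_sym v1 v2) (eq_sym v1 v3) (eq_sym v2 v3) n1 n2 n3 n12 n13 n23.
have hd : forall a, a \in s -> (d a <= \rank (eigenspace (ncg_distLap G) a))%N.
  move=> a; rewrite /s !inE => /or4P[] /eqP ->.
  - rewrite d0; apply: eigen_rank; last by [].
    exact: rank0.
  - rewrite d1; apply: eigen_rank; last by [].
    by rewrite /v1 e1; exact: rank3.
  - rewrite d2; apply: eigen_rank; last by [].
    by rewrite /v2 e2; exact: rank2.
  - rewrite d3; apply: eigen_rank; last by [].
    by rewrite /v3 e3; exact: rank1.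
have hs : (\sum_(a <- s) d a)%N = #|V|.
  by rewrite /s !big_cons big_nil d0 d1 d2 d3.
by rewrite (eigen_char us hd hs) /s !big_cons big_nil d0 d1 d2 d3 expr1 mulr1.
Qed.

End Abs.

Import GRing.Theory Num.Theory.
Local Open Scope ring_scope.

Lemma prod_nseq_XsubC (R : comRingType) k (a : R) :
  \prod_(x <- nseq k a) ('X - x%:P) = ('X - a%:P) ^+ k.
Proof.
elim: k => [|k IH]; first by rewrite big_nil expr0.
by rewrite /= big_cons IH exprS.
Qed.

Unset Implicit Arguments.
Theorem theorem4p2 (n : nat) (hn : (4 <= n)%N) :
  char_poly (ncg_distLap [set: gsort 'SD_(2 ^ n)]%G) =
  \prod_(x <- 0 :: nseq (2 ^ (n - 2)) (2 ^ n - 2)%N%:R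
               ++ nseq (2 ^ (n - 2)) (2 ^ n)%N%:R
               ++ nseq (2 ^ (n - 1) - 3) (2 ^ n + 2 ^ (n - 1) - 4)%N%:R)
    ('X - x%:P).
Proof.
have n3 : (3 < n)%N by [].
have [X [x0 [y [z [[XG oG oX] hZ [Xz z1] [cX c2 c3] [Gy Xx0]]]]]] :=
  SD_facts n3 (isog_refl [set: gsort 'SD_(2 ^ n)]%G).
set r := (2 ^ (n - 2))%N.
have e4 : (2 ^ n = 4 * r)%N.
  rewrite /r (_ : n = (n - 2).+2) ?expnS ?mulnA; last by lia.
  by rewrite (_ : (n - 2).+2 - 2 = n - 2)%N; last by lia.
have e2 : (2 ^ (n - 1) = 2 * r)%N.
  by rewrite /r (_ : (n - 1 = (n - 2).+1)%N) ?expnS //; lia.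
have e2' : (2 ^ n.-1 = 2 * r)%N by rewrite -subn1.
have r4 : (3 < r)%N.
  rewrite /r (_ : n - 2 = (n - 4) + 2)%N ?expnD; last by lia.
  by have := expn_gt0 2 (n - 4); move: (2 ^ (n - 4))%N => t; lia.
rewrite (char_abs XG (etrans oG e4) (etrans oX e2') r4 hZ Xz z1 cX c2 c3 Gy Xx0).
rewrite big_cons !big_cat /= !prod_nseq_XsubC e4 e2.
have -> : (4 * r + 2 * r - 4 = 6 * r - 4)%N by lia.
by rewrite mulrA.
Qed.
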